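(* Let $\mathfrak{g}$ be a complex filiform Lie algebra of nilpotency class $c\ge 5$. Then $\mathfrak{g}$ does not admit a periodic prederivation.
   Context: A nilpotent Lie algebra of dimension $n$ is filiform if its nilpotency class is $n-1$. A linear map $P:\mathfrak{g}\to\mathfrak{g}$ is a prederivation if $P([x,[y,z]])=[P(x),[y,z]]+[x,[P(y),z]]+[x,[y,P(z)]]$ for all $x,y,z\in\mathfrak{g}$; it is periodic if $P^m=\mathrm{id}$ for some integer $m\ge 1$. *)

(* Defs.v *)
(* Complex numbers = complex R (real-closed library) for a
   realType R (any realType is the field of real numbers up to isomorphism). *)
From HB Require Import structures.
From mathcomp Require Import all_boot all_order all_algebra.
From mathcomp Require Import complex.
From mathcomp Require Import reals.
Set Implicit Arguments. Unset Strict Implicit. Unset Printing Implicit Defensive.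
Import Order.TTheory GRing.Theory Num.Theory.
Local Open Scope ring_scope.

Section LieDefs.
Variables (F : fieldType) (V : vectType F) (br : V -> V -> V).

Definition is_lie_bracket : Prop :=
  [/\ (forall (a : F) (x y z : V), br (a *: x + y) z = a *: br x z + br y z),
      (forall (a : F) (x y z : V), br x (a *: y + z) = a *: br x y + br x z),
      (forall x : V, br x x = 0) &
      (forall x y z : V, br x (br y z) + br y (br z x) + br z (br x y) = 0)].

(* [A, B] : the subspace spanned by all brackets [a, b], a in A, b in B
   (by bilinearity it suffices to bracket basis vectors). *)
Definition brspace (A B : {vspace V}) : {vspace V} :=
  (<< [seq br u v | u <- vbasis A, v <- vbasis B] >>)%VS.

(* lower central series, indexed as in the paper: C^1 = g, C^{i+1} = [g, C^i];
   C^0 is also set to g *)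
Fixpoint lcs (i : nat) : {vspace V} :=
  match i with
  | 0 => fullv
  | 1 => fullv
  | k.+1 => brspace fullv (lcs k)
  end.

Definition nil_class (c : nat) : Prop :=
  lcs c.+1 = 0%VS /\ lcs c != 0%VS.

Definition filiform : Prop := nil_class (\dim (fullv : {vspace V})).-1.

Definition prederivation (P : V -> V) : Prop :=
  linear P /\
  forall x y z : V,
    P (br x (br y z)) = br (P x) (br y z) + br x (br (P y) z) + br x (br y (P z)).

Definition periodic (P : V -> V) : Prop :=
  exists m : nat, (1 <= m)%N /\ forall x : V, iter m P x = x.

End LieDefs.

(* Main.v *)
Require Import Defs.
From HB Require Import structures.
From mathcomp Require Import all_boot all_order all_algebra.
From mathcomp Require Import complex.
From mathcomp Require Import reals.
From mathcomp Require Import separable cyclotomic cyclic.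
From mathcomp Require Import ring.
From mathcomp Require Import zify.
From Stdlib Require Import Classical.
Set Implicit Arguments. Unset Strict Implicit. Unset Printing Implicit Defensive.
Import Order.TTheory GRing.Theory Num.Theory.
Local Open Scope ring_scope.

Section Lie.
Variables (F : fieldType) (V : vectType F) (br : V -> V -> V).
Hypothesis Hbr : is_lie_bracket br.

Lemma brlin_l a x y z : br (a *: x + y) z = a *: br x z + br y z.
Proof. by case: Hbr. Qed.
Lemma brlin_r a x y z : br x (a *: y + z) = a *: br x y + br x z.
Proof. by case: Hbr. Qed.
Lemma brxx x : br x x = 0. Proof. by case: Hbr. Qed.
Lemma jacobi0 x y z : br x (br y z) + br y (br z x) + br z (br x y) = 0.
Proof. by case: Hbr. Qed.

Lemma br0l z : br 0 z = 0.
Proof.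
have h := brlin_l 1 0 0 z; rewrite !scale1r addr0 in h.
by apply: (addrI (br 0 z)); rewrite addr0 -h.
Qed.
Lemma br0r z : br z 0 = 0.
Proof.
have h := brlin_r 1 z 0 0; rewrite !scale1r addr0 in h.
by apply: (addrI (br z 0)); rewrite addr0 -h.
Qed.
Lemma brDl x y z : br (x + y) z = br x z + br y z.
Proof. by rewrite -{1}[x]scale1r brlin_l scale1r. Qed.
Lemma brDr x y z : br z (x + y) = br z x + br z y.
Proof. by rewrite -{1}[x]scale1r brlin_r scale1r. Qed.
Lemma brZl a x z : br (a *: x) z = a *: br x z.
Proof. by rewrite -[a *: x]addr0 brlin_l br0l addr0. Qed.
Lemma brZr a x z : br z (a *: x) = a *: br z x.
Proof. by rewrite -[a *: x]addr0 brlin_r br0r addr0. Qed.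
Lemma brNl x z : br (- x) z = - br x z.
Proof. by rewrite -scaleN1r brZl scaleN1r. Qed.
Lemma brNr x z : br z (- x) = - br z x.
Proof. by rewrite -scaleN1r brZr scaleN1r. Qed.
Lemma brBl x y z : br (x - y) z = br x z - br y z.
Proof. by rewrite brDl brNl. Qed.
Lemma brBr x y z : br z (x - y) = br z x - br z y.
Proof. by rewrite brDr brNr. Qed.
Lemma brC x y : br x y = - br y x.
Proof.
have := brxx (x + y); rewrite brDl !brDr !brxx add0r addr0 => /eqP.
by rewrite addr_eq0 => /eqP.
Qed.
Lemma jacobi a b z : br a (br b z) = br b (br a z) + br (br a b) z.
Proof.
have := jacobi0 a b z; rewrite (brC z a) brNr (brC z (br a b)) => /eqP.
rewrite -addrA addr_eq0 => /eqP ->.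
by rewrite opprD !opprK.
Qed.

Lemma span_ind (S : seq V) (Q : V -> Prop) :
  Q 0 -> (forall a u w, Q u -> Q w -> Q (a *: u + w)) ->
  (forall s, s \in S -> Q s) -> forall u, u \in <<S>>%VS -> Q u.
Proof.
move=> Q0 QC QS u uS.
have := @coord_span _ _ _ (in_tuple S) u uS => ->.
apply: big_rec => // i x _ Qx; apply: QC => //; apply: QS.
by apply: mem_nth; exact: ltn_ord i.
Qed.

Lemma brspace_ind (A B : {vspace V}) (Q : V -> Prop) :
  Q 0 -> (forall a u w, Q u -> Q w -> Q (a *: u + w)) ->
  (forall a b, a \in A -> b \in B -> Q (br a b)) ->
  forall u, u \in brspace br A B -> Q u.
Proof.
move=> Q0 QC QS; apply: span_ind => // s /allpairsP [[a b] /= [aA bB ->]].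
by apply: QS; apply: vbasis_mem.
Qed.

Lemma mem_br (A B : {vspace V}) a b : a \in A -> b \in B -> br a b \in brspace br A B.
Proof.
move=> aA bB.
rewrite -(span_basis (vbasisP A)) in aA.
rewrite -(span_basis (vbasisP B)) in bB.
move: a aA; apply: (span_ind (Q := fun a => br a b \in brspace br A B)).
- by rewrite br0l mem0v.
- by move=> c u w hu hw; rewrite brlin_l memvD ?memvZ.
move=> s sA; move: b bB; apply: (span_ind (Q := fun b => br s b \in brspace br A B)).
- by rewrite br0r mem0v.
- by move=> c u w hu hw; rewrite brlin_r memvD ?memvZ.
by move=> t tB; apply: memv_span; apply/allpairsP; exists (s, t).
Qed.
End Lie.

Section LCS.
Variables (F : fieldType) (V : vectType F) (br : V -> V -> V).
Hypothesis Hbr : is_lie_bracket br.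
Local Notation C k := (lcs br k).

Lemma C_succ k : (0 < k)%N -> C k.+1 = brspace br fullv (C k).
Proof. by case: k. Qed.

Lemma memC_br k a z : (0 < k)%N -> z \in C k -> br a z \in C k.+1.
Proof. by move=> k0 zC; rewrite C_succ //; apply: mem_br => //; apply: memvf. Qed.

Lemma memC_brl k a z : (0 < k)%N -> z \in C k -> br z a \in C k.+1.
Proof. by move=> k0 zC; rewrite (brC Hbr) memvN; apply: memC_br. Qed.

Lemma CS k : (C k.+1 <= C k)%VS.
Proof.
elim: k => [|k IH]; first exact: subvv.
case: k IH => [|k] IH; first exact: subvf.
apply/subvP; rewrite C_succ //.
apply: (brspace_ind (Q := fun u => u \in C k.+2)).
- exact: mem0v.
- by move=> c u w hu hw; rewrite memvD ?memvZ.
by move=> a b _ bC; apply: memC_br => //; apply: (subvP IH).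
Qed.

Lemma C_le i j : (i <= j)%N -> (C j <= C i)%VS.
Proof.
move/subnK => <-; elim: (j - i)%N => [|d IH]; first exact: subvv.
by rewrite addSn; apply: subv_trans IH; apply: CS.
Qed.

Lemma memC_le i j u : (i <= j)%N -> u \in C j -> u \in C i.
Proof. by move/C_le/subvP; apply. Qed.

Lemma memC_brC i j a b : (0 < i)%N -> (0 < j)%N -> a \in C i -> b \in C j ->
  br a b \in C (i + j).
Proof.
elim: i j a b => [//|i IH] j a b _ j0.
case: i IH => [|i] IH aC bC.
  by rewrite add1n; apply: memC_br.
rewrite C_succ // in aC.
move: a aC; apply: (brspace_ind (Q := fun u => br u b \in C (i.+2 + j))).
- by rewrite br0l // mem0v.
- by move=> c u w hu hw; rewrite brlin_l // memvD ?memvZ.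
move=> a c _ cC.
have -> : br (br a c) b = br a (br c b) - br c (br a b).
  by rewrite (jacobi Hbr a c b) [X in X - _]addrC addrK.
apply: memvB.
- rewrite addSn; apply: memC_br => //.
  exact: IH.
- have -> : (i.+2 + j = i.+1 + j.+1)%N by rewrite addSn addnS.
  by apply: IH => //; apply: memC_br.
Qed.

Lemma C_stat k : (0 < k)%N -> C k = C k.+1 -> forall j, (k <= j)%N -> C j = C k.
Proof.
move=> k0 e j /subnK <-; elim: (j - k)%N => [|d IH] //.
rewrite addSn C_succ ?addn_gt0 ?k0 ?orbT // IH -C_succ //.
Qed.
End LCS.

Section Prim.
Variable R : realType.
Lemma prim_ex n : (n > 0)%N -> {z : complex R | n.-primitive_root z}.
Proof.
pose p : {poly complex R} := 'X^n - 1; have [r Dp] := closed_field_poly_normal p.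
move=> n_gt0; apply/sigW; rewrite (monicP _) ?monicXnsubC // scale1r in Dp.
have rn1: all n.-unity_root r by apply/allP=> z; rewrite -root_prod_XsubC -Dp.
have sz_r: (n < (size r).+1)%N.
  by rewrite -(size_prod_XsubC r id) -Dp size_XnsubC.
have [|z] := hasP (has_prim_root n_gt0 rn1 _ sz_r); last by exists z.
by rewrite -separable_prod_XsubC -Dp separable_Xn_sub_1 // pnatr_eq0 -lt0n.
Qed.

Lemma unit3 (a b : complex R) : `|a| = 1 -> `|b| = 1 -> `|a + a + b| = 1 -> b = - a.
Proof.
move=> na nb ns.
have aA : a * a^* = 1 by rewrite -normCK na expr1n.
have bB : b * b^* = 1 by rewrite -normCK nb expr1n.
have sS : (a + a + b) * (a^* + a^* + b^*) = 1 by rewrite -!rmorphD -normCK ns expr1n.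
set A := a^* in aA sS *; set B := b^* in bB sS *.
have h2 : 2 * (a * B + A * b + 2) = 0.
  have -> : 2 * (a * B + A * b + 2) =
     (a + a + b) * (A + A + B) - 1 - 4 * (a * A - 1) - (b * B - 1) by ring.
  by rewrite sS aA bB !subrr mulr0 !subr0.
have h : (a * B + 1) * (A * b + 1) = 0.
  have h1 : a * B + A * b + 2 = 0.
    by move/eqP: h2; rewrite mulf_eq0 pnatr_eq0 /= => /eqP.
  have -> : (a * B + 1) * (A * b + 1) = (a * A) * (b * B) + (a * B + A * b + 2) - 1 by ring.
  by rewrite aA bB h1 mulr1 addr0 subrr.
move/eqP: h; rewrite mulf_eq0 => /orP [] /eqP h.
- have ha : a * (b * B) = (a * B + 1) * b - b by ring.
  by rewrite bB mulr1 h mul0r sub0r in ha; rewrite ha opprK.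
- have hb : (a * A) * b = a * (A * b + 1) - a by ring.
  by rewrite aA mul1r h mulr0 sub0r in hb.
Qed.
End Prim.

Section Pred.
Variables (R : realType) (V : vectType (complex R)) (br : V -> V -> V) (P : V -> V) (m : nat).
Hypotheses (Hbr : is_lie_bracket br) (HP : prederivation br P) (Hm : (0 < m)%N)
  (Hper : forall x, iter m P x = x).
Local Notation C k := (lcs br k).

Lemma Plin a u w : P (a *: u + w) = a *: P u + P w.
Proof. by case: HP => L _; apply: L. Qed.
Lemma P0 : P 0 = 0.
Proof.
have h := Plin 1 0 0; rewrite !scale1r addr0 in h.
by apply: (addrI (P 0)); rewrite addr0 -h.
Qed.
Lemma PD u w : P (u + w) = P u + P w.
Proof. by rewrite -{1}[u]scale1r Plin scale1r. Qed.
Lemma PZ a u : P (a *: u) = a *: P u.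
Proof. by rewrite -[a *: u]addr0 Plin P0 addr0. Qed.
Lemma PN u : P (- u) = - P u.
Proof. by rewrite -scaleN1r PZ scaleN1r. Qed.
Lemma PB u w : P (u - w) = P u - P w.
Proof. by rewrite PD PN. Qed.
Lemma P_sum k (f : 'I_k -> V) : P (\sum_(i < k) f i) = \sum_(i < k) P (f i).
Proof. exact: (big_morph P PD P0). Qed.
Lemma PT a b c : P (br a (br b c)) =
  br (P a) (br b c) + br a (br (P b) c) + br a (br b (P c)).
Proof. by case: HP => _; apply. Qed.

Lemma iter_eig x l k : P x = l *: x -> iter k P x = l ^+ k *: x.
Proof.
move=> e; elim: k => [|k IH]; first by rewrite expr0 scale1r.
by rewrite iterS IH PZ e scalerA -exprSr.
Qed.

Lemma eig_unit x l : P x = l *: x -> x != 0 -> `|l| = 1.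
Proof.
move=> e x0; have h := Hper x; rewrite (iter_eig m e) in h.
have lm : l ^+ m = 1.
  apply/eqP; rewrite -subr_eq0; apply/eqP.
  have : (l ^+ m - 1) *: x = 0 by rewrite scalerBl h scale1r subrr.
  by move/eqP; rewrite scaler_eq0 (negbTE x0) orbF => /eqP.
by apply/eqP; rewrite -(pexpr_eq1 Hm) ?normr_ge0 // -normrX lm normr1.
Qed.

Lemma T_eig a b c la lb lc : P a = la *: a -> P b = lb *: b -> P c = lc *: c ->
  P (br a (br b c)) = (la + lb + lc) *: br a (br b c).
Proof.
move=> ea eb ec; rewrite PT ea eb ec (brZl Hbr) (brZl Hbr) (brZr Hbr) !(brZr Hbr).
by rewrite !scalerDl.
Qed.

Lemma vanish a b c la lb lc : P a = la *: a -> P b = lb *: b -> P c = lc *: c ->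
  `|la + lb + lc| != 1 -> br a (br b c) = 0.
Proof.
move=> ea eb ec n1; apply/eqP; apply: contraR n1 => nz.
by apply/eqP; apply: (eig_unit (T_eig ea eb ec)).
Qed.

Lemma eig_out (U : {vspace V}) : U != fullv ->
  exists x l, P x = l *: x /\ x \notin U.
Proof.
move=> Uf; apply: NNPP => H; move/negP: Uf; apply; rewrite eqEsubv subvf /=.
have allU : forall x l, P x = l *: x -> x \in U.
  move=> x l e; apply/negPn/negP => xU; apply: H; exists x, l; split => //.
have [w pw] := prim_ex R Hm.
pose pi (j : nat) (v : V) := \sum_(k < m) (w ^+ j) ^+ k *: iter k P v.
have piE : forall j v, P (pi j v) = (w ^+ j)^-1 *: pi j v.
  move=> j v.
  have wj0 : w ^+ j != 0 by rewrite expf_neq0 // (prim_root_eq0 pw) -lt0n.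
  apply: (@scalerI _ _ (w ^+ j)) => //.
  rewrite scalerA mulfV // scale1r /pi P_sum scaler_sumr.
  have -> : \sum_(i < m) w ^+ j *: P ((w ^+ j) ^+ i *: iter i P v) =
      \sum_(i < m) (w ^+ j) ^+ i.+1 *: iter i.+1 P v.
    by apply: eq_bigr => i _; rewrite PZ scalerA -exprS iterS.
  case: (m) Hm Hper pw => [//|m'] _ Hper' pw.
  rewrite big_ord_recr big_ord_recl /=.
  rewrite -[P (iter m' P v)]/(iter m'.+1 P v) Hper'.
  have -> : (w ^+ j) ^+ m'.+1 = 1 by rewrite -exprM mulnC exprM (prim_expr_order pw) expr1n.
  by rewrite expr0 !scale1r addrC.
apply/subvP => v _.
have sumE : \sum_(j < m) pi j v = m%:R *: v.
  rewrite /pi exchange_big /=.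
  have -> : \sum_(k < m) \sum_(j < m) (w ^+ j) ^+ k *: iter k P v =
      \sum_(k < m) (\sum_(j < m) (w ^+ k) ^+ j) *: iter k P v.
    apply: eq_bigr => k _; rewrite scaler_suml; apply: eq_bigr => j _.
    by rewrite -!exprM mulnC.
  case: (m) Hm pw => [//|m'] _ pw.
  rewrite big_ord_recl /= expr0.
  have -> : \sum_(j < m'.+1) (1 : complex R) ^+ j = m'.+1%:R.
    by rewrite (eq_bigr (fun _ => 1)) ?sumr_const ?card_ord // => j _; rewrite expr1n.
  rewrite big1 ?addr0 // => k _.
  have wk1 : w ^+ (bump 0 k) != 1.
    rewrite -(prim_order_dvd pw); apply/negP => /dvdn_leq.
    by rewrite /bump /= add1n => /(_ isT); rewrite ltnS leqNgt ltn_ord.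
  have : (w ^+ (bump 0 k) - 1) * (\sum_(j < m'.+1) (w ^+ (bump 0 k)) ^+ j) = 0.
    by rewrite -subrX1 -exprM mulnC exprM (prim_expr_order pw) expr1n subrr.
  move/eqP; rewrite mulf_eq0 subr_eq0 (negbTE wk1) /= => /eqP ->.
  by rewrite scale0r.
have : m%:R *: v \in U.
  rewrite -sumE; apply: memv_suml => j _; apply: (allU _ _ (piE j v)).
move=> h; have := memvZ (m%:R^-1) h; rewrite scalerA mulVf ?scale1r // pnatr_eq0 -lt0n. exact: Hm.
Qed.

Lemma Cinv2 k : (0 < k)%N -> (forall u, u \in C k -> P u \in C k) ->
  forall u, u \in C k.+2 -> P u \in C k.+2.
Proof.
move=> k0 Hk; rewrite C_succ //.
apply: (brspace_ind (Q := fun u => P u \in C k.+2)).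
- by rewrite P0 mem0v.
- by move=> a u w hu hw; rewrite Plin memvD ?memvZ.
move=> a z _; rewrite C_succ //.
apply: (brspace_ind (Q := fun z => P (br a z) \in C k.+2)).
- by rewrite (br0r Hbr) P0 mem0v.
- by move=> c u w hu hw; rewrite (brlin_r Hbr) Plin memvD ?memvZ.
move=> b c _ cC; rewrite PT !memvD //; do 2? apply: memC_br => //.
by apply: Hk.
Qed.
End Pred.

Section VS.
Variables (F : fieldType) (V : vectType F).
Lemma dim_add_line (U : {vspace V}) x : x \notin U -> \dim (<[x]> + U) = (\dim U).+1.
Proof.
move=> xU; rewrite dimv_disjoint_sum; last first.
  apply/eqP; rewrite -subv0; apply/subvP => u; rewrite memv_cap => /andP [/vlineP [k ->] kxU].
  rewrite memv0 scaler_eq0; case: (eqVneq k 0) => [_|k0] //=; exfalso.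
  by move/negP: xU; apply; move: (memvZ k^-1 kxU); rewrite scalerA mulVf ?scale1r.
rewrite dim_vline; case: eqP => [x0|//]; by rewrite x0 mem0v in xU.
Qed.

Lemma dim_add_le (U W : {vspace V}) : (\dim (U + W) <= \dim U + \dim W)%N.
Proof. exact: (dimv_add_leqif U W). Qed.

Lemma dim_line_le (x : V) : (\dim <[x]> <= 1)%N.
Proof. by rewrite dim_vline; case: (x != 0). Qed.

Lemma in_add_line (U : {vspace V}) (x b : V) : b \in (<[x]> + U)%VS -> exists t, b - t *: x \in U.
Proof.
case/memv_addP => u /vlineP [t ->] [w wU ->]; exists t.
by rewrite addrC addKr.
Qed.
End VS.

Section Fil.
Variables (F : fieldType) (V : vectType F) (br : V -> V -> V).
Hypothesis Hbr : is_lie_bracket br.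
Local Notation C k := (lcs br k).
Local Notation n := (\dim (fullv : {vspace V})).
Variable c : nat.
Hypotheses (Hfil : filiform br) (Hc : nil_class br c) (c5 : (5 <= c)%N).

Lemma nil_class_uniq c1 c2 : nil_class br c1 -> nil_class br c2 -> c1 = c2.
Proof.
have key : forall c1 c2, nil_class br c1 -> nil_class br c2 -> (c1 < c2)%N -> False.
  move=> a b [a1 a2] [b1 b2] ab; move/negP: b2; apply; rewrite -subv0 -a1.
  exact: (C_le Hbr).
move=> h1 h2; case: (ltngtP c1 c2) => // ab; [exfalso; exact: (key _ _ h1 h2 ab)|].
exfalso; exact: (key _ _ h2 h1 ab).
Qed.

Lemma c_eq : c = n.-1.
Proof. exact: nil_class_uniq Hc Hfil. Qed.

Lemma Cneq k : (1 <= k <= c)%N -> C k != C k.+1.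
Proof.
case/andP => k1 kc; apply/eqP => e.
case: Hc => h0 /negP; apply.
have e1 := C_stat k1 e (leqW kc); have e2 := C_stat k1 e kc.
by rewrite e2 -e1 h0.
Qed.

Lemma dim_lt k : (1 <= k <= c)%N -> (\dim (C k.+1) < \dim (C k))%N.
Proof.
move=> kk; rewrite (ltn_leqif (dimv_leqif_eq (CS Hbr k))).
by rewrite eq_sym; apply: Cneq.
Qed.

Lemma C1f : C 1 = fullv. Proof. by []. Qed.

Lemma codim2 : (\dim (C 2) + 2 <= n)%N.
Proof.
rewrite leqNgt; apply/negP => hlt.
have : ~~ (fullv <= C 2)%VS.
  apply/negP => h; have := Cneq (k := 1); rewrite /= -C1f => /(_ (leq_trans _ c5)).
  by rewrite eqEsubv h subvf => /(_ isT).
case/subvPn => x _ xC2.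
have full : (<[x]> + C 2)%VS = fullv.
  apply/eqP; rewrite eqEdim subvf /= dim_add_line //.
  by move: hlt; rewrite addn2 ltnS.
have : C 2 = C 3.
  apply/eqP; rewrite eqEsubv (CS Hbr) andbT; apply/subvP.
  rewrite [C 2]C_succ // C1f -full.
  apply: (brspace_ind (Q := fun u => u \in C 3)).
  - exact: mem0v.
  - by move=> a u w hu hw; rewrite memvD ?memvZ.
  move=> a b /memv_addP [a1 /vlineP [p ->] [a2 a2C ->]] /memv_addP [b1 /vlineP [q ->] [b2 b2C ->]].
  rewrite (brDl Hbr) !(brDr Hbr) !(brZl Hbr) !(brZr Hbr) (brxx Hbr) !scaler0 add0r.
  have h1 : br x b2 \in C 3 by apply: (memC_br Hbr).
  have h2 : br a2 x \in C 3 by apply: (memC_brl Hbr).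
  have h3 : br a2 b2 \in C 3.
    by apply: (memC_le Hbr (i := 3) (j := 4)) => //; apply: (memC_brC Hbr (i := 2) (j := 2)).
  by rewrite !memvD ?memvZ.
by move/eqP; apply/negP; apply: Cneq; apply: leq_trans c5.
Qed.

Lemma dimC k : (2 <= k <= c.+1)%N -> \dim (C k) = (c.+1 - k)%N.
Proof.
have ce := c_eq.
have n6 : (6 <= n)%N by move: c5; rewrite ce; lia.
have up : forall i, (2 <= i <= c.+1)%N -> (\dim (C i) + i <= c.+1)%N.
  move=> i /andP []; elim: i => // i IH; case: i IH => [//|i] IH.
  case: i IH => [_ _ _|i IH _ kc].
    by have := codim2; rewrite ce; lia.
  have := IH isT (ltnW kc); have := dim_lt (k := i.+2).
  have -> : (1 <= i.+2 <= c)%N by move: kc; lia.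
  move=> /(_ isT); lia.
have low : forall j, (j < c)%N -> (c.+1 - j.+1 + \dim (C (c.+1 - j.+1)) >= c.+1)%N.
  elim => [_|j IH jc].
    rewrite subSS subn0; case: Hc => _ h.
    have : \dim (C c) != 0%N by rewrite dimv_eq0.
    lia.
  have := IH (ltnW jc).
  have := dim_lt (k := (c.+1 - j.+2)).
  have -> : ((c.+1 - j.+2).+1 = c.+1 - j.+1)%N by lia.
  move=> h; have {h} h := h ltac:(apply/andP; split; lia).
  lia.
move=> /andP [k2 kc].
have h1 := up k ltac:(apply/andP; split; lia).
case: (ltnP k c.+1) => kc'.
  have := low (c.+1 - k.+1)%N ltac:(lia).
  have -> : (c.+1 - (c.+1 - k.+1).+1 = k)%N by lia.
  lia.
have -> : k = c.+1 by lia.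
by case: Hc => -> _; rewrite dimv0 subnn.
Qed.

Lemma one_dim k a b : (2 <= k <= c)%N -> a \in C k -> a \notin C k.+1 -> b \in C k ->
  exists t, b - t *: a \in C k.+1.
Proof.
move=> kk aC aN bC; apply: in_add_line.
have -> : (<[a]> + C k.+1)%VS = C k; last by [].
apply/eqP; rewrite eqEdim subv_add -memvE aC (CS Hbr) /= dim_add_line //.
rewrite (dimC (k := k)) ?(dimC (k := k.+1)); move: kk; lia.
Qed.

Lemma n_eq : n = c.+1.
Proof. by have := c_eq; move: c5; lia. Qed.

Lemma C2_proper : C 2 != fullv.
Proof.
apply/negP => /eqP e; have := dimC (k := 2); rewrite e n_eq; move: c5; lia.
Qed.

Lemma Cx2_proper x : (<[x]> + C 2)%VS != fullv.
Proof.
apply/negP => /eqP e; have := dim_add_le <[x]> (C 2); rewrite e n_eq dimC.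
  by have := dim_line_le x; lia.
by move: c5; lia.
Qed.

Lemma Cxy3_proper x y : (<[x]> + <[y]> + C 3)%VS != fullv.
Proof.
apply/negP => /eqP e; have := dim_add_le (<[x]> + <[y]>) (C 3); rewrite e n_eq dimC.
  by have := dim_line_le x; have := dim_line_le y; have := dim_add_le <[x]> <[y]>; lia.
by move: c5; lia.
Qed.

Lemma full_dec x y : x \notin C 2 -> y \notin (<[x]> + C 2)%VS ->
  forall g, exists p q, g - (p *: x + q *: y) \in C 2.
Proof.
move=> xC yC g.
have e : (<[y]> + (<[x]> + C 2))%VS = fullv.
  apply/eqP; rewrite eqEdim subvf /= dim_add_line // dim_add_line // n_eq (dimC (k := 2)); move: c5; lia.
have := memvf g; rewrite -e => /in_add_line [q] /in_add_line [p] h.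
by exists p, q; rewrite opprD addrA addrAC.
Qed.
End Fil.

Section VS2.
Variables (F : fieldType) (V : vectType F).
Lemma mem_addl (A B : {vspace V}) v : v \in A -> v \in (A + B)%VS.
Proof. exact: (subvP (addvSl A B)). Qed.
Lemma mem_addr (A B : {vspace V}) v : v \in B -> v \in (A + B)%VS.
Proof. exact: (subvP (addvSr A B)). Qed.
End VS2.

Section Span.
Variables (F : fieldType) (V : vectType F) (br : V -> V -> V).
Hypothesis Hbr : is_lie_bracket br.
Local Notation C k := (lcs br k).

Lemma Sspan k x y w1 w2 : (0 < k)%N ->
  (fullv <= <[x]> + <[y]> + C 2)%VS -> (C k <= <[w1]> + <[w2]> + C k.+1)%VS ->
  (C k.+1 <= <[br x w1]> + <[br x w2]> + <[br y w1]> + <[br y w2]> + C k.+2)%VS.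
Proof.
move=> k0 HF Hk; apply/subvP; rewrite C_succ //.
set W := (_ + _)%VS.
have W1 : br x w1 \in W by do 4! apply: mem_addl; apply: memv_line.
have W2 : br x w2 \in W by do 3! apply: mem_addl; apply: mem_addr; apply: memv_line.
have W3 : br y w1 \in W by do 2! apply: mem_addl; apply: mem_addr; apply: memv_line.
have W4 : br y w2 \in W by apply: mem_addl; apply: mem_addr; apply: memv_line.
have W5 : forall u, u \in C k.+2 -> u \in W by move=> u; apply: mem_addr.
apply: (brspace_ind (Q := fun u => u \in W)).
- exact: mem0v.
- by move=> a u w hu hw; rewrite memvD ?memvZ.
move=> a z /(subvP HF) /memv_addP [a1 /memv_addP [a3 /vlineP [p ->] [a4 /vlineP [q ->] ->]]].
move=> [a2 a2C ->] zC.
have [z1 /memv_addP [z3 /vlineP [r ->] [z4 /vlineP [s ->] ->]] [z2 z2C ez]] :=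
  memv_addP (subvP Hk z zC).
have Hb : forall b, br b w1 \in W -> br b w2 \in W -> br b z \in W.
  move=> b h1 h2; rewrite ez !(brDr Hbr) !(brZr Hbr).
  by rewrite !memvD ?memvZ //; apply: W5; apply: (memC_br Hbr).
rewrite !(brDl Hbr) !(brZl Hbr); apply: memvD; first by rewrite memvD ?memvZ ?Hb.
by apply: W5; apply: (memC_brC Hbr (i := 2) (j := k)).
Qed.

Lemma Sspan1 k x y w : (0 < k)%N ->
  (fullv <= <[x]> + <[y]> + C 2)%VS -> (C k <= <[w]> + C k.+1)%VS ->
  (C k.+1 <= <[br x w]> + <[br y w]> + C k.+2)%VS.
Proof.
move=> k0 HF Hk.
have Hk' : (C k <= <[w]> + <[w]> + C k.+1)%VS.
  apply: (subv_trans Hk); rewrite subv_add; apply/andP; split.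
    by rewrite -memvE; do 2! apply: mem_addl; apply: memv_line.
  by apply/subvP => u; apply: mem_addr.
apply: (subv_trans (Sspan k0 HF Hk')).
rewrite !subv_add -!memvE; apply/andP; split; last by apply/subvP => u; apply: mem_addr.
have h1 : br x w \in (<[br x w]> + <[br y w]> + C k.+2)%VS.
  by do 2! apply: mem_addl; apply: memv_line.
have h2 : br y w \in (<[br x w]> + <[br y w]> + C k.+2)%VS.
  by apply: mem_addl; apply: mem_addr; apply: memv_line.
by rewrite h1 h2.
Qed.
End Span.

Section Num.
Variable R : realType.
Lemma no3 (a : complex R) : `|a| = 1 -> `|a + a + a| != 1.
Proof.
move=> ha; apply/eqP => h; have e := unit3 ha ha h.
have : a + a = 0 by rewrite {1}e addNr.
rewrite -mulr2n -mulr_natr => /eqP; rewrite mulf_eq0 pnatr_eq0 orbF => /eqP a0.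
by move: ha; rewrite a0 normr0 => /eqP; rewrite eq_sym oner_eq0.
Qed.
Lemma no2 (a b : complex R) : `|a| = 1 -> `|b| = 1 -> b != - a -> `|a + a + b| != 1.
Proof. by move=> ha hb ne; apply/eqP => h; move/eqP: ne; apply; apply: unit3. Qed.
Lemma two_neq (a : complex R) : `|a| = 1 -> a != - a.
Proof.
move=> ha; apply/eqP => e.
have : a + a = 0 by rewrite {2}e subrr.
rewrite -mulr2n -mulr_natr => /eqP; rewrite mulf_eq0 pnatr_eq0 orbF => /eqP a0.
by move: ha; rewrite a0 normr0 => /eqP; rewrite eq_sym oner_eq0.
Qed.
End Num.

Section Main.
Variables (R : realType) (V : vectType (complex R)) (br : V -> V -> V) (P : V -> V) (m c : nat).
Hypotheses (Hbr : is_lie_bracket br) (HP : prederivation br P) (Hm : (0 < m)%N)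
  (Hper : forall x, iter m P x = x) (Hfil : filiform br) (Hc : nil_class br c) (c5 : (5 <= c)%N).
Local Notation C k := (lcs br k).

Lemma van a b z la lb lz : P a = la *: a -> P b = lb *: b -> P z = lz *: z ->
  `|la + lb + lz| != 1 -> br a (br b z) = 0.
Proof. exact: (vanish Hbr HP Hm Hper). Qed.
Lemma unitE x l : P x = l *: x -> x != 0 -> `|l| = 1.
Proof. exact: (eig_unit HP Hm Hper). Qed.

Lemma c3' : (1 <= 3 <= c)%N. Proof. by rewrite /= (leq_trans _ c5). Qed.
Lemma c4' : (1 <= 4 <= c)%N. Proof. by rewrite /= (leq_trans _ c5). Qed.
Lemma c5'' : (1 <= 5 <= c)%N. Proof. by rewrite /= (leq_trans _ c5). Qed.
Lemma c23 : (2 <= 3 <= c)%N. Proof. by rewrite /= (leq_trans _ c5). Qed.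

Lemma Cneq_sub k : (1 <= k <= c)%N -> ~ (C k <= C k.+1)%VS.
Proof.
move=> kk h; move/negP: (Cneq Hc kk); apply; rewrite eqEsubv h.
by rewrite (CS Hbr).
Qed.

Lemma G a b la lb : P a = la *: a -> P b = lb *: b -> a != 0 -> b != 0 ->
  (fullv <= <[a]> + <[b]> + C 2)%VS -> lb = - la.
Proof.
move=> ea eb a0 b0 HF; case: (eqVneq lb (- la)) => // ne; exfalso.
have ua := unitE ea a0; have ub := unitE eb b0.
have z1 : br a (br a b) = 0 by apply: (van ea ea eb); apply: no2.
have z2 : br b (br a b) = 0.
  apply: (van eb ea eb); rewrite addrAC; apply: no2 => //.
  by apply: contra ne => /eqP ->; rewrite opprK.
have H2 : (C 2 <= <[br a b]> + C 3)%VS.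
  apply: (subv_trans (Sspan Hbr (k := 1) isT HF HF)).
  rewrite !subv_add -!memvE -!andbA; apply/and5P; split; last by apply/subvP => u; apply: mem_addr.
  - by rewrite (brxx Hbr) mem0v.
  - by apply: mem_addl; apply: memv_line.
  - by rewrite (brC Hbr) memvN; apply: mem_addl; apply: memv_line.
  - by rewrite (brxx Hbr) mem0v.
have H3 := Sspan1 Hbr (k := 2) isT HF H2.
rewrite z1 z2 in H3.
apply: (Cneq_sub c3').
apply: (subv_trans H3); rewrite !subv_add -!memvE !mem0v subvv //.
Qed.

Lemma caseC x y v (al dl : complex R) :
  P x = al *: x -> P y = (- al) *: y -> P v = dl *: v -> `|al| = 1 -> `|dl| = 1 ->
  (fullv <= <[x]> + <[y]> + C 2)%VS -> (C 2 <= <[v]> + C 3)%VS ->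
  v \in C 2 -> br x y - v \in C 3 -> dl != al -> dl != - al -> False.
Proof.
move=> ex ey ev ua ud HF H2 vC2 xyv n1 n2.
have ua' : `|- al| = 1 by rewrite normrN.
have z1 : br x (br x v) = 0 by apply: (van ex ex ev); apply: no2.
have z2 : br y (br y v) = 0 by apply: (van ey ey ev); apply: no2; rewrite ?opprK.
have z3 : br v (br x v) = 0.
  apply: (van ev ex ev); rewrite addrAC; apply: no2 => //.
  by apply: contra n2 => /eqP ->; rewrite opprK.
have z4 : br v (br y v) = 0.
  apply: (van ev ey ev); rewrite addrAC; apply: no2 => //.
  by apply: contra n1 => /eqP /oppr_inj ->.
have K5 : br (br x y) v \in C 5.
  have -> : br (br x y) v = br (br x y - v) v by rewrite (brBl Hbr) (brxx Hbr) subr0.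
  exact: (memC_brC Hbr (i := 3) (j := 2) isT isT xyv vC2).
have K6 : forall w, w \in C 3 -> br (br x y) w - br v w \in C 6.
  by move=> w wC; rewrite -(brBl Hbr); apply: (memC_brC Hbr (i := 3) (j := 3) isT isT xyv wC).
have H3 := Sspan1 Hbr (k := 2) isT HF H2.
have H4 := Sspan Hbr (k := 3) isT HF H3.
set u := br x (br y v).
have H4' : (C 4 <= <[u]> + C 5)%VS.
  apply: (subv_trans H4).
  rewrite !subv_add -!memvE -!andbA; apply/and5P; split; last by apply/subvP => w; apply: mem_addr.
  - by rewrite z1 mem0v.
  - by apply: mem_addl; apply: memv_line.
  - have -> : br y (br x v) = u - br (br x y) v by rewrite /u (jacobi Hbr x y v) addrK.
    by apply: memvB; [apply: mem_addl; apply: memv_line | apply: mem_addr].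
  - by rewrite z2 mem0v.
have H5 := Sspan1 Hbr (k := 4) isT HF H4'.
have xu : br x u \in C 6.
  rewrite /u (jacobi Hbr x y v) (brDr Hbr); apply: memvD; last first.
    by apply: (memC_br Hbr).
  rewrite (jacobi Hbr x y (br x v)) z1 (br0r Hbr) add0r.
  rewrite -[X in X \in _](subrK (br v (br x v))) z3 addr0 -z3.
  by apply: K6; apply: (memC_br Hbr).
have yu : br y u \in C 6.
  rewrite /u (jacobi Hbr y x (br y v)) z2 (br0r Hbr) add0r (brC Hbr y x) (brNl Hbr) memvN.
  rewrite -[X in X \in _](subrK (br v (br y v))) z4 addr0 -z4.
  by apply: K6; apply: (memC_br Hbr).
apply: (Cneq_sub c5'').
apply: (subv_trans H5); rewrite !subv_add -!memvE xu yu subvv //.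
Qed.

Lemma Sep (W : {vspace V}) (X Y : V) (a b : complex R) : P X = a *: X -> P Y = b *: Y -> a != b ->
  (forall u, u \in W -> P u \in W) -> X - Y \in W -> Y \in W.
Proof.
move=> eX eY ab HW XY.
have e : P (X - Y) - a *: (X - Y) = (a - b) *: Y.
  rewrite (PB HP) eX eY.
  by rewrite scalerBr scalerBl opprB addrC addrA addrNK addrC.
have : (a - b) *: Y \in W.
  by rewrite -e; apply: memvB; [apply: HW | apply: memvZ].
move/(memvZ (a - b)^-1); rewrite scalerA mulVf ?scale1r //.
by rewrite subr_eq0.
Qed.

Lemma one_dim_sub k a : (2 <= k <= c)%N -> a \in C k -> a \notin C k.+1 ->
  (C k <= <[a]> + C k.+1)%VS.
Proof.
move=> kk aC aN; apply/subvP => b bC.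
have [t h] := one_dim Hbr Hfil Hc c5 kk aC aN bC.
rewrite -(subrK (t *: a) b) addrC; apply: memv_add => //.
by apply: memvZ; apply: memv_line.
Qed.

Lemma caseA x y v (al : complex R) :
  P x = al *: x -> P y = (- al) *: y -> P v = al *: v -> `|al| = 1 ->
  (fullv <= <[x]> + <[y]> + C 2)%VS -> (C 2 <= <[v]> + C 3)%VS ->
  v \in C 2 -> br x y - v \in C 3 -> (forall u, u \in C 6 -> P u \in C 6) -> False.
Proof.
move=> ex ey ev ua HF H2 vC2 xyv Hinv.
have ua' : `|- al| = 1 by rewrite normrN.
have z1 : br x (br x v) = 0 by apply: (van ex ex ev); apply: no3.
have z3 : br v (br x v) = 0 by apply: (van ev ex ev); apply: no3.
have eB : P (br y (br x y)) = (- al) *: br y (br x y).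
  by rewrite (T_eig Hbr HP ey ex ey) addNr add0r.
have zB : br y (br y (br y (br x y))) = 0 by apply: (van ey ey eB); apply: no3.
have K5 : br (br x y) v \in C 5.
  have -> : br (br x y) v = br (br x y - v) v by rewrite (brBl Hbr) (brxx Hbr) subr0.
  exact: (memC_brC Hbr (i := 3) (j := 2) isT isT xyv vC2).
have K6 : forall w, w \in C 3 -> br (br x y) w - br v w \in C 6.
  by move=> w wC; rewrite -(brBl Hbr); apply: (memC_brC Hbr (i := 3) (j := 3) isT isT xyv wC).
have c4 := c4'.
have c3 := c3'.
have c5' := c5''.
have xv3 : br x v \in C 3 by apply: (memC_br Hbr).
have yv3 : br y v \in C 3 by apply: (memC_br Hbr).
have H3 := Sspan1 Hbr (k := 2) isT HF H2.
case: (boolP (br x v \in C 4)) => xv4.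
-
  have yv4 : br y v \notin C 4.
    apply/negP => yv4; apply: (Cneq_sub c3); apply: (subv_trans H3).
    by rewrite !subv_add -!memvE xv4 yv4 subvv.
  have H3' := one_dim_sub (k := 3) c23 yv3 yv4.
  have H4 := Sspan1 Hbr (k := 3) isT HF H3'.
  have xyv5 : br x (br y v) \in C 5.
    by rewrite (jacobi Hbr x y v) memvD //; apply: (memC_br Hbr).
  set s := br y (br y v).
  have H4' : (C 4 <= <[s]> + C 5)%VS.
    apply: (subv_trans H4); rewrite !subv_add -!memvE.
    rewrite (mem_addr _ xyv5) (mem_addl _ (memv_line s)) /=.
    by apply/subvP => w; apply: mem_addr.
  have H5 := Sspan1 Hbr (k := 4) isT HF H4'.
  have vxy : v - br x y \in C 3 by rewrite -opprB memvN.
  have D4 : br y (v - br x y) \in C 4 by apply: (memC_br Hbr).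
  have eyv : br y v = br y (br x y) + br y (v - br x y).
    by rewrite (brBr Hbr) addrC subrK.
  have ys : br y s \in C 6.
    rewrite /s eyv; move: D4; set D := br y (v - br x y) => D4.
    rewrite !(brDr Hbr) zB add0r.
    by apply: (memC_br Hbr) => //; apply: (memC_br Hbr).
  have xs : br x s \in C 6.
    have [r5 /vlineP [r ->] [c5v c5C exv]] := memv_addP (subvP H4' _ xv4).
    case: (eqVneq r 0) => [r0|rn0].
    + rewrite r0 scale0r add0r in exv.
      set X := br x (br y (br y (br x y))).
      set Y := br v (br y v).
      have hXs : br x s - X \in C 6.
        rewrite /s /X -!(brBr Hbr).
        by apply: (memC_br Hbr) => //; apply: (memC_br Hbr).
      have hYs : br x s - Y \in C 6.
        rewrite /s (jacobi Hbr x y (br y v)) /Y -addrA; apply: memvD.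
          by apply: (memC_br Hbr).
        by apply: K6.
      have eX : P X = (- al) *: X.
        by rewrite (T_eig Hbr HP ex ey eB) addrN add0r.
      have eY : P Y = al *: Y.
        by rewrite (T_eig Hbr HP ev ey ev) addrN add0r.
      have XY : X - Y \in C 6.
        have -> : X - Y = (br x s - Y) - (br x s - X).
          by rewrite opprB [RHS]addrC addrA addrNK.
        exact: memvB.
      have Y6 : Y \in C 6.
        apply: (Sep eX eY _ Hinv XY).
        by rewrite eq_sym; apply: two_neq.
      by rewrite -(subrK Y (br x s)) memvD.
    + have : r *: br x s \in C 6.
        have e : r *: br x s = br x (br x v) - br x c5v.
          by rewrite exv (brDr Hbr) (brZr Hbr) addrK.
        rewrite e z1 sub0r memvN.
        by apply: (memC_br Hbr).
      move/(memvZ r^-1); rewrite scalerA mulVf ?scale1r //.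
  apply: (Cneq_sub c5'); apply: (subv_trans H5).
  by rewrite !subv_add -!memvE xs ys subvv.
-
  have H3' := one_dim_sub (k := 3) c23 xv3 xv4.
  have H4 := Sspan1 Hbr (k := 3) isT HF H3'.
  have u5 : br y (br x v) \in C 5.
    have [r5 /vlineP [t ->] [c4v c4C eyv]] := memv_addP (subvP H3' _ yv3).
    rewrite (jacobi Hbr y x v) eyv (brDr Hbr) (brZr Hbr) z1 scaler0 add0r.
    rewrite (brC Hbr y x) (brNl Hbr); apply: memvD; first by apply: (memC_br Hbr).
    by rewrite memvN.
  apply: (Cneq_sub c4); apply: (subv_trans H4).
  by rewrite !subv_add -!memvE z1 mem0v u5 subvv.
Qed.

Lemma xy_notin x y : (fullv <= <[x]> + <[y]> + C 2)%VS -> br x y \notin C 3.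
Proof.
move=> HF; apply/negP => xy3.
apply: (Cneq_sub (k := 2)); first by rewrite /= (leq_trans _ c5).
apply: (subv_trans (Sspan Hbr (k := 1) isT HF HF)).
rewrite !subv_add -!memvE -!andbA; apply/and5P; split => //.
- by rewrite (brxx Hbr) mem0v.
- by rewrite (brC Hbr) memvN.
- by rewrite (brxx Hbr) mem0v.
Qed.

Lemma no_periodic : False.
Proof.
have [x [al [ex xC2]]] := eig_out HP Hm Hper (C2_proper Hbr Hfil Hc c5).
have x0 : x != 0 by apply: contraNneq xC2 => ->; apply: mem0v.
have ua := unitE ex x0.
have [y [be [ey yC]]] := eig_out HP Hm Hper (Cx2_proper Hbr Hfil Hc c5 x).
have y0 : y != 0 by apply: contraNneq yC => ->; apply: mem0v.
have xC2' : x \notin C 2 by [].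
have yC' : y \notin (<[x]> + C 2)%VS by [].
have HF : (fullv <= <[x]> + <[y]> + C 2)%VS.
  apply/subvP => g _; have [p [q h]] := full_dec Hbr Hfil Hc c5 xC2' yC' g.
  rewrite -(subrK (p *: x + q *: y) g) addrC; apply: memv_add => //.
  by apply: memv_add; apply: memvZ; apply: memv_line.
have ebe := G ex ey x0 y0 HF; rewrite ebe in ey.
have [u3 [ga [eu u3C]]] := eig_out HP Hm Hper (Cxy3_proper Hbr Hfil Hc c5 x y).
have u0 : u3 != 0 by apply: contraNneq u3C => ->; apply: mem0v.
have [c1 [c2 wC2]] := full_dec Hbr Hfil Hc c5 xC2' yC' u3.
set w := u3 - (c1 *: x + c2 *: y) in wC2.
have hc2 : c2 * - al = ga * c2.
  case: (eqVneq c2 0) => [->|c2n]; first by rewrite mul0r mulr0.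
  have HF' : (fullv <= <[x]> + <[u3]> + C 2)%VS.
    apply: (subv_trans HF); rewrite !subv_add -!memvE -!andbA; apply/and3P; split.
    - by do 2! apply: mem_addl; apply: memv_line.
    - have -> : y = c2^-1 *: (- (c1 *: x) + (u3 - w)).
        by rewrite subKr addKr scalerA mulVf ?scale1r.
      apply: memvZ; apply: memvD; first by rewrite memvN; apply: memvZ; do 2! apply: mem_addl; apply: memv_line.
      by apply: memvB; [apply: mem_addl; apply: mem_addr; apply: memv_line | apply: mem_addr].
    - by apply/subvP => z; apply: mem_addr.
  by rewrite (G ex eu x0 u0 HF') mulrC.
have hc1 : c1 * al = ga * c1.
  case: (eqVneq c1 0) => [->|c1n]; first by rewrite mul0r mulr0.
  have HF' : (fullv <= <[y]> + <[u3]> + C 2)%VS.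
    apply: (subv_trans HF); rewrite !subv_add -!memvE -!andbA; apply/and3P; split.
    - have -> : x = c1^-1 *: (- (c2 *: y) + (u3 - w)).
        by rewrite subKr addrC addrK scalerA mulVf ?scale1r.
      apply: memvZ; apply: memvD; first by rewrite memvN; apply: memvZ; do 2! apply: mem_addl; apply: memv_line.
      by apply: memvB; [apply: mem_addl; apply: mem_addr; apply: memv_line | apply: mem_addr].
    - by do 2! apply: mem_addl; apply: memv_line.
    - by apply/subvP => z; apply: mem_addr.
  by rewrite (G ey eu y0 u0 HF') opprK mulrC.
have ew : P w = ga *: w.
  rewrite /w (PB HP) (PD HP) !(PZ HP) eu ex ey scalerBr scalerDr !scalerA.
  by rewrite hc1 hc2.
have wC3 : w \notin C 3.
  apply/negP => wC3; move/negP: u3C; apply.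
  rewrite -(subrK (c1 *: x + c2 *: y) u3); apply: memvD; first by apply: mem_addr.
  by apply: memvD; apply: memvZ; [do 2! apply: mem_addl | apply: mem_addl; apply: mem_addr]; apply: memv_line.
have c22 : (2 <= 2 <= c)%N by rewrite /= (leq_trans _ c5).
have xyC2 : br x y \in C 2 by apply: (memC_br Hbr (k := 1)) => //; apply: memvf.
have [e he] := one_dim Hbr Hfil Hc c5 c22 wC2 wC3 xyC2.
have e0 : e != 0.
  apply: contraNneq (xy_notin HF) => e0; by rewrite e0 scale0r subr0 in he.
set v := e *: w.
have ev : P v = ga *: v by rewrite /v (PZ HP) ew !scalerA mulrC.
have vC2 : v \in C 2 by apply: memvZ.
have vC3 : v \notin C 3.
  apply: contra wC3 => vC3; have := memvZ e^-1 vC3.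
  by rewrite /v scalerA mulVf ?scale1r.
have v0 : v != 0 by apply: contraNneq vC3 => ->; apply: mem0v.
have ug := unitE ev v0.
have H2 := one_dim_sub c22 vC2 vC3.
have C3inv : forall u, u \in C 3 -> P u \in C 3.
  by apply: (Cinv2 Hbr HP (k := 1)) => // u _; apply: memvf.
have C2inv : forall u, u \in C 2 -> P u \in C 2.
  move=> u /(subvP H2) /memv_addP [a /vlineP [t ->] [b bC ->]].
  rewrite (PD HP) (PZ HP) ev; apply: memvD; first by do 2! apply: memvZ.
  by apply: (memC_le Hbr (i := 2) (j := 3)) => //; apply: C3inv.
have C4inv := Cinv2 Hbr HP (k := 2) isT C2inv.
have C6inv := Cinv2 Hbr HP (k := 4) isT C4inv.
case: (eqVneq ga al) => [gal|n1].
  by rewrite gal in ev; apply: (caseA ex ey ev ua HF H2 vC2 he C6inv).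
case: (eqVneq ga (- al)) => [gal|n2]; last first.
  by apply: (caseC ex ey ev ua ug HF H2 vC2 he n1 n2).
have ex' : P x = (- - al) *: x by rewrite opprK.
have ev' : P (- v) = (- al) *: (- v) by rewrite (PN HP) ev gal scalerN.
have ua' : `|- al| = 1 by rewrite normrN.
have HF' : (fullv <= <[y]> + <[x]> + C 2)%VS by rewrite (addvC <[y]>%VS).
have H2' : (C 2 <= <[- v]> + C 3)%VS.
  apply: (subv_trans H2); rewrite subv_add -memvE; apply/andP; split.
    by rewrite -memvN; apply: mem_addl; apply: memv_line.
  by apply/subvP => z; apply: mem_addr.
have he' : br y x - - v \in C 3 by rewrite (brC Hbr) opprK addrC -opprB memvN.
have vC2' : - v \in C 2 by rewrite memvN.
exact: (caseA ey ex' ev' ua' HF' H2' vC2' he' C6inv).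
Qed.
End Main.

Theorem corollary5p12 (R : realType) (V : vectType (complex R))
    (br : V -> V -> V) (c : nat) :
  is_lie_bracket br -> filiform br -> nil_class br c -> (5 <= c)%N ->
  ~ (exists P : V -> V, prederivation br P /\ periodic P).
Proof.
move=> Hbr Hfil Hc c5 [P [HP [m [Hm Hper]]]].
exact: (no_periodic Hbr HP Hm Hper Hfil Hc c5).
Qed.
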